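(* Let $\mathcal{A}$ and $\mathcal{B}$ be configurations of $d$ doors such that $\mathcal{A}$ dominates $\mathcal{B}$. Then for every knock sequence $\pi$, $\mathbb{T}_{\mathcal{A}}(\pi)\le\mathbb{T}_{\mathcal{B}}(\pi)$.
   Context: Dependent doors model. Fix an integer $d\ge 2$ and doors $1,\dots,d$, all initially closed; once a door opens it stays open forever. A configuration $\mathcal{C}$ specifies for each door $i$ a function $\phi_i^{\mathcal{C}}$ mapping every finite nonempty sequence $(X_1,\dots,X_n)$ of subsets of $\{1,\dots,i-1\}$ to $[0,1]$: $\phi_i^{\mathcal{C}}(X_1,\dots,X_n)$ is the probability that door $i$ has opened during $n$ knocks on it, where $X_j$ is the set of open doors among $\{1,\dots,i-1\}$ at the time of the $j$-th knock on door $i$ (so a closed door $i$ opens at its $n$-th knock with conditional probability $(\phi_i(X_1..X_n)-\phi_i(X_1..X_{n-1}))/(1-\phi_i(X_1..X_{n-1}))$, with $\phi_i$ of the empty sequence equal to $0$). Configurations are assumed monotone ($\phi_i(X')\le\phi_i(X)$ whenever $X'$ is a, not necessarily consecutive, subsequence of $X$) and positively correlated ($\phi_i(X'_1,\dots,X'_n)\le\phi_i(X_1,\dots,X_n)$ whenever $X'_j\subseteq X_j$ for all $j$). Configuration $\mathcal{A}$ dominates configuration $\mathcal{B}$ if $\phi_i^{\mathcal{A}}(X)\ge\phi_i^{\mathcal{B}}(X)$ for every door $i$ and every finite nonempty sequence $X$ of subsets of $\{1,\dots,i-1\}$. A knock sequence $\pi$ is an infinite sequence of door indices, executed in order without any feedback;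 $\mathbb{T}_{\mathcal{C}}(\pi)$ is the expected number of knocks until all $d$ doors are open. *)

(* Defs.v *)
From HB Require Import structures.
From mathcomp Require Import all_boot all_order all_algebra.
From mathcomp Require Import reals.
From mathcomp Require Import ereal sequences.
Set Implicit Arguments. Unset Strict Implicit. Unset Printing Implicit Defensive.
Import Order.TTheory GRing.Theory Num.Theory.
Local Open Scope ring_scope.

Section DoorsDefs.
Variables (R : realType) (d : nat).

(** Doors are 'I_d (door k of the paper is the ordinal k-1).
    A configuration is phi : 'I_d -> seq {set 'I_d} -> R; phi i X is
    meaningful only for nonempty X whose entries are subsets of the
    doors below i. *)

Definition lowset (i : 'I_d) : {set 'I_d} := [set j : 'I_d | (j < i)%N].

Definition valid_seq (i : 'I_d) (X : seq {set 'I_d}) : bool :=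
  all (fun x : {set 'I_d} => x \subset lowset i) X.

Definition config_vals (phi : 'I_d -> seq {set 'I_d} -> R) : Prop :=
  forall i X, valid_seq i X -> X != [::] -> 0 <= phi i X <= 1.

Definition monotone_config (phi : 'I_d -> seq {set 'I_d} -> R) : Prop :=
  forall i X X', valid_seq i X -> valid_seq i X' -> X' != [::] ->
    subseq X' X -> phi i X' <= phi i X.

Definition pos_correlated (phi : 'I_d -> seq {set 'I_d} -> R) : Prop :=
  forall i X X', valid_seq i X -> valid_seq i X' -> X' != [::] ->
    size X' = size X -> all2 (fun a b : {set 'I_d} => a \subset b) X' X ->
    phi i X' <= phi i X.

Definition dominates (phiA phiB : 'I_d -> seq {set 'I_d} -> R) : Prop :=
  forall i X, valid_seq i X -> X != [::] -> phiB i X <= phiA i X.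

Definition phiE (phi : 'I_d -> seq {set 'I_d} -> R) i (X : seq {set 'I_d}) : R :=
  if X is [::] then 0 else phi i X.

(** Given a forward trajectory t = [:: s_0; ...; s_n] of sets of open doors
    (s_j = open doors just before knock j, i.e. after j knocks), the sequence
    of sets of open lower doors at the knocks on door i among knocks 0..m-1. *)
Definition hist (pi : nat -> 'I_d) (t : seq {set 'I_d}) (i : 'I_d) (m : nat)
  : seq {set 'I_d} :=
  [seq nth set0 t j :&: lowset i | j <- iota 0 m & pi j == i].

Definition trans (phi : 'I_d -> seq {set 'I_d} -> R) (pi : nat -> 'I_d)
  (t : seq {set 'I_d}) (s' : {set 'I_d}) : R :=
  let n := (size t).-1 in
  let i := pi n in
  let s := last set0 t in
  if i \in s then (s' == s)%:R else
  let Xp := phiE phi i (hist pi t i n) in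
  let Xc := phiE phi i (hist pi t i n.+1) in
  let q := (Xc - Xp) / (1 - Xp) in
  if s' == i |: s then q else if s' == s then 1 - q else 0.

(** Probability of a reversed trajectory r = [:: s_n; ...; s_0]. *)
Fixpoint rprob (phi : 'I_d -> seq {set 'I_d} -> R) (pi : nat -> 'I_d)
  (r : seq {set 'I_d}) : R :=
  match r with
  | [::] => 0
  | s :: r' =>
      match r' with
      | [::] => (s == set0)%:R
      | _ :: _ => rprob phi pi r' * trans phi pi (rev r') s
      end
  end.

Definition P_notdone (phi : 'I_d -> seq {set 'I_d} -> R) (pi : nat -> 'I_d)
  (n : nat) : R :=
  \sum_(r : (n.+1).-tuple {set 'I_d})
     (head set0 r != [set: 'I_d])%:R * rprob phi pi r.

(** Expected number of knocks until all doors are open: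
    E[T] = sum_{n>=0} P(T > n), as an extended real (possibly +oo). *)
Definition ET (phi : 'I_d -> seq {set 'I_d} -> R) (pi : nat -> 'I_d) : \bar R :=
  (\sum_(n <oo) (P_notdone phi pi n)%:E)%E.

End DoorsDefs.

(* Main.v *)
Require Import Defs.
From HB Require Import structures.
From mathcomp Require Import all_boot all_order all_algebra.
From mathcomp Require Import reals.
From mathcomp Require Import ereal sequences.
From mathcomp Require Import ring lra.
Import Order.TTheory GRing.Theory Num.Theory.
Local Open Scope ring_scope.
Set Implicit Arguments. Unset Strict Implicit. Unset Printing Implicit Defensive.

Section Doors.
Variables (R : realType) (d : nat) (pi : nat -> 'I_d).
Implicit Types (i : 'I_d) (m n : nat) (phi : 'I_d -> seq {set 'I_d} -> R) (tau : 'I_d -> nat).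

Definition Hs tau (i : 'I_d) (m : nat) : seq {set 'I_d} :=
  [seq [set k | (tau k < j)%N] :&: lowset i | j <- iota 0 m & pi j == i].

Definition Wn phi (n : nat) tau (i : 'I_d) : R :=
  if (tau i < n)%N then phiE phi i (Hs tau i (tau i).+1) - phiE phi i (Hs tau i (tau i))
  else 1 - phiE phi i (Hs tau i n).

Definition traj (n : nat) tau : seq {set 'I_d} :=
  [seq [set k | (tau k < j)%N] | j <- iota 0 n.+1].

Definition valid phi := config_vals phi /\ monotone_config phi.

Lemma Hs_valid tau i m : valid_seq i (Hs tau i m).
Proof. by apply/allP => x /mapP [j _ ->]; apply: subsetIr. Qed.

Lemma Hs_S tau i m : Hs tau i m.+1 =
  Hs tau i m ++ (if pi m == i then [:: [set k | (tau k < m)%N] :&: lowset i] else [::]).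
Proof.
by rewrite /Hs -addn1 iotaD filter_cat map_cat /=; case: (pi m == i).
Qed.

Lemma Hs_Sne tau i m : pi m != i -> Hs tau i m.+1 = Hs tau i m.
Proof. by move=> h; rewrite Hs_S (negbTE h) cats0. Qed.

Lemma Hs_loc tau tau' i m : (forall k : 'I_d, (k < i)%N -> tau k = tau' k) ->
  Hs tau i m = Hs tau' i m.
Proof.
move=> h; apply/eq_in_map => j _; apply/setP => k; rewrite !inE.
by case: (ltnP k i) => hk; rewrite ?andbF // h.
Qed.

Lemma Hs_prefix tau i m m' : (m <= m')%N -> subseq (Hs tau i m) (Hs tau i m').
Proof.
move=> /subnKC <-; rewrite /Hs iotaD filter_cat map_cat; exact: prefix_subseq.
Qed.

Lemma phiE_01 phi tau i m : valid phi -> 0 <= phiE phi i (Hs tau i m) <= 1.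
Proof.
rewrite /valid => -[hv _]; rewrite /phiE; case E: (Hs tau i m) => [|x s]; first by rewrite lexx ler01.
apply: hv => //; rewrite -E; exact: Hs_valid.
Qed.

Lemma phiE_mono phi tau i m m' : valid phi -> (m <= m')%N ->
  phiE phi i (Hs tau i m) <= phiE phi i (Hs tau i m').
Proof.
rewrite /valid => -[hv hm] hmm; rewrite /phiE.
case E: (Hs tau i m) => [|x s].
  case E': (Hs tau i m') => [|y t]; first by [].
  by have := hv i (Hs tau i m') (Hs_valid _ _ _); rewrite E' => /(_ isT) /andP[].
case E': (Hs tau i m') => [|y t].
  by have := Hs_prefix tau i hmm; rewrite E E' subseq0.
rewrite -E -E'; apply: hm; [exact: Hs_valid | exact: Hs_valid | by rewrite E | exact: Hs_prefix].
Qed.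

Lemma Wn_ge0 phi n tau i : valid phi -> 0 <= Wn phi n tau i.
Proof.
move=> hv; rewrite /Wn; case: ifP => _.
  by rewrite subr_ge0 phiE_mono.
by rewrite subr_ge0; case/andP: (phiE_01 tau i n hv).
Qed.

Lemma Wn_loc phi n tau tau' i : (forall k : 'I_d, (k <= i)%N -> tau k = tau' k) ->
  Wn phi n tau i = Wn phi n tau' i.
Proof.
move=> h; have hl : forall k : 'I_d, (k < i)%N -> tau k = tau' k.
  by move=> k hk; apply: h; apply: ltnW.
have hH m : Hs tau i m = Hs tau' i m by apply: Hs_loc.
by rewrite /Wn !hH h.
Qed.


Lemma size_traj n tau : size (traj n tau) = n.+1.
Proof. by rewrite size_map size_iota. Qed.

Lemma nth_traj n tau j : (j <= n)%N -> nth set0 (traj n tau) j = [set k | (tau k < j)%N].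
Proof. by move=> hj; rewrite (nth_map 0%N) ?size_iota ?nth_iota. Qed.

Lemma hist_traj n tau i m : (m <= n.+1)%N -> hist pi (traj n tau) i m = Hs tau i m.
Proof.
move=> hm; apply/eq_in_map => j; rewrite mem_filter mem_iota => /andP[_ /andP[_ hj]].
by rewrite nth_traj //; rewrite -ltnS; apply: leq_trans hm.
Qed.

Lemma last_traj n tau : last set0 (traj n tau) = [set k | (tau k < n)%N].
Proof. by rewrite -nth_last size_traj nth_traj. Qed.

Lemma traj_S n tau : traj n.+1 tau = rcons (traj n tau) [set k | (tau k < n.+1)%N].
Proof. by rewrite /traj -(addn1 n.+1) iotaD map_cat cats1. Qed.

Lemma rprob_cons phi s r : r != [::] ->
  rprob phi pi (s :: r) = rprob phi pi r * trans phi pi (rev r) s.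
Proof. by case: r. Qed.

Lemma rprob_traj phi n tau : valid phi ->
  rprob phi pi (rev (traj n tau)) = \prod_j Wn phi n tau j.
Proof.
move=> hv; elim: n => [|n IH].
  rewrite /traj /=.
  have -> : [set k | (tau k < 0)%N] = set0 by apply/setP=> k; rewrite !inE.
  rewrite eqxx; apply/esym/big1 => j _.
  by rewrite /Wn ltn0 /Hs /= /phiE subr0.
rewrite traj_S rev_rcons rprob_cons; last by rewrite -size_eq0 size_rev size_traj.
rewrite IH revK /trans size_traj last_traj !hist_traj //=.
set S := [set k | (tau k < n)%N]; set S' := [set k | (tau k < n.+1)%N].
case: (boolP [exists k, (k != pi n) && (tau k == n)]).
  case/existsP => k /andP[hk1 /eqP hk2].
  have hkS : Hs tau k n.+1 = Hs tau k n by apply: Hs_Sne; rewrite eq_sym.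
  rewrite [RHS](bigD1 k) //= {2}/Wn hk2 ltnSn hkS subrr mul0r.
  have kS' : k \in S' by rewrite inE hk2.
  have kS : k \notin S by rewrite inE hk2 ltnn.
  have hSS : (S' == S) = false by apply/negbTE; apply: contraNneq kS => <-.
  have hSi : (S' == pi n |: S) = false.
    by apply/negbTE; apply: contraNneq kS => e; move: kS'; rewrite e !inE (negbTE hk1).
  by rewrite hSS hSi; case: ifP => _; rewrite mulr0.
move/existsPn => hno.
have hno' k : k != pi n -> tau k != n.
  by move=> hk; move: (hno k); rewrite hk.
rewrite (bigD1 (pi n)) //= [RHS](bigD1 (pi n)) //=.
have -> : \prod_(j | j != pi n) Wn phi n.+1 tau j = \prod_(j | j != pi n) Wn phi n tau j.
  apply: eq_bigr => j hj; rewrite /Wn.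
  case: (ltngtP (tau j) n) => h.
  - by rewrite ltnS (ltnW h).
  - by rewrite ltnS leqNgt h /= Hs_Sne // eq_sym.
  - by move: (hno' j hj); rewrite h eqxx.
rewrite mulrAC; congr (_ * _).
set Xp := phiE phi (pi n) (Hs tau (pi n) n).
set Xc := phiE phi (pi n) (Hs tau (pi n) n.+1).
have hXc : Xc <= 1 by case/andP: (phiE_01 tau (pi n) n.+1 hv).
have hXpc : Xp <= Xc by apply: phiE_mono.
have hSS : (forall k, k != pi n \/ (tau k != n)%N) -> S' = S.
  move=> hk; apply/setP => k; rewrite !inE ltnS leq_eqVlt.
  case: (hk k) => [/hno' /negbTE -> // | /negbTE -> //].
rewrite /Wn; case: (ltngtP (tau (pi n)) n) => h.
- have -> : S' = S.
    apply: hSS => k.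
    by case: (eqVneq k (pi n)) => [->|]; [right; rewrite neq_ltn h | left].
  by rewrite inE h eqxx mulr1 ltnS (ltnW h).
- have hi : pi n \notin S by rewrite inE ltnNge (ltnW h).
  rewrite (negbTE hi) hSS; last first.
    move=> k; case: (eqVneq k (pi n)) => [->|]; [right; rewrite neq_ltn h orbT | left] => //.
  have -> : (S == pi n |: S) = false.
    by apply/negbTE; apply: contraNneq hi => ->; rewrite !inE eqxx.
  rewrite eqxx ltnS leqNgt h /=.
  rewrite -/Xp -/Xc.
  have [hp|hp] := eqVneq Xp 1.
    have hc : Xc = 1 by apply/le_anti; rewrite hXc -hp.
    by rewrite hp hc subrr mul0r.
  have hp' : 1 - Xp != 0 by rewrite subr_eq0 eq_sym.
  rewrite mulrBr mulr1 mulrCA mulfV // mulr1; ring.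
- have hi : pi n \notin S by rewrite /S inE h ltnn.
  have -> : S' = pi n |: S.
    apply/setP => k; rewrite !inE ltnS leq_eqVlt.
    case: (eqVneq k (pi n)) => [->|hk]; first by rewrite h eqxx.
    by rewrite (negbTE (hno' k hk)).
  rewrite (negbTE hi) eqxx h ltnSn.
  rewrite -/Xp -/Xc.
  have [hp|hp] := eqVneq Xp 1.
    have hc : Xc = 1 by apply/le_anti; rewrite hXc -hp.
    by rewrite hp hc subrr mul0r.
  have hp' : 1 - Xp != 0 by rewrite subr_eq0 eq_sym.
  by rewrite mulrCA mulfV // mulr1.
Qed.


Lemma trans_sub phi t s' : trans phi pi t s' != 0 -> last set0 t \subset s'.
Proof.
rewrite /trans /=; set s := last set0 t; case: ifP => _.
  by case: (eqVneq s' s) => [-> _ | _]; rewrite ?subxx //= eqxx.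
case: (eqVneq s' (pi (size t).-1 |: s)) => [-> _ | _]; first exact: subsetUr.
case: (eqVneq s' s) => [-> _ | _]; first exact: subxx.
by rewrite eqxx.
Qed.

Lemma traj_ext n tau tau' : tau =1 tau' -> traj n tau = traj n tau'.
Proof. by move=> h; apply/eq_map => j; apply/setP => k; rewrite !inE h. Qed.

Lemma rprob_img phi n r : rprob phi pi r != 0 -> size r = n.+1 ->
  exists tau, (forall j, tau j <= n)%N /\ r = rev (traj n tau).
Proof.
elim: n r => [|n IH] [|s r] hr; try (by move: hr; rewrite /= eqxx).
  move=> /succn_inj hs; case: r hr hs => // hr _; exists (fun _ => 0%N); split => //.
  move: hr => /=; case: (eqVneq s set0) => [-> _|]; last by rewrite eqxx.
  by rewrite /traj /=; congr [:: _]; apply/setP => k; rewrite !inE.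
move=> hs0; have hs : size r = n.+1 by apply: succn_inj. have rn : r != [::] by rewrite -size_eq0 hs.
move: hr; rewrite rprob_cons // mulf_eq0 negb_or => /andP[h1 h2].
have [tau' [hb er]] := IH r h1 hs; subst r.
move: h2; rewrite revK => /trans_sub; rewrite last_traj => hsub.
pose tau j := if (tau' j < n)%N then tau' j else if j \in s then n else n.+1.
exists tau; split.
  by move=> j; rewrite /tau; case: ifP => h; [apply: ltnW; apply: ltnW | case: ifP].
rewrite traj_S rev_rcons; congr (_ :: rev _).
  apply/setP => k; rewrite inE /tau; case: ifP => h.
    by rewrite ltnS (ltnW h); apply: (subsetP hsub); rewrite inE.
  by case: (k \in s); rewrite ?ltnSn ?ltnn.
apply/eq_in_map => j; rewrite mem_iota add0n => /andP[_ hj].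
apply/setP => k; rewrite !inE /tau; case: ifP => // h.
have hj' : (j <= n)%N by rewrite -ltnS.
rewrite !ltnNge (leq_trans hj'); last by rewrite leqNgt h.
by case: ifP => _ //; rewrite (leq_trans hj').
Qed.

Lemma traj_inj n tau1 tau2 : (forall j, tau1 j <= n)%N -> (forall j, tau2 j <= n)%N ->
  traj n tau1 = traj n tau2 -> tau1 =1 tau2.
Proof.
move=> h1 h2 e k.
case: (ltngtP (tau1 k) (tau2 k)) => // h.
  have := congr1 (fun t => k \in nth set0 t (tau2 k)) e.
  by rewrite !nth_traj // !inE h ltnn.
have := congr1 (fun t => k \in nth set0 t (tau1 k)) e.
by rewrite !nth_traj // !inE h ltnn.
Qed.

Lemma head_rev (T : Type) (x : T) s : head x (rev s) = last x s.
Proof. by case/lastP: s => //= s y; rewrite rev_rcons last_rcons. Qed.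


Definition updn tau (io : 'I_d) (t : nat) : 'I_d -> nat :=
  fun j => if j == io then t else tau j.

Lemma Hs_updn tau io t m : Hs (updn tau io t) io m = Hs tau io m.
Proof.
apply: Hs_loc => k hk; rewrite /updn.
by have -> : (k == io) = false by apply/negbTE; rewrite -val_eqE neq_ltn hk.
Qed.

Lemma Wn_updn phi n tau io t : Wn phi n (updn tau io t) io =
  if (t < n)%N then phiE phi io (Hs tau io t.+1) - phiE phi io (Hs tau io t)
  else 1 - phiE phi io (Hs tau io n).
Proof. by rewrite /Wn !Hs_updn {1 2 3}/updn eqxx. Qed.

Lemma cdf phi n tau io k : (k <= n)%N ->
  \sum_(t < k.+1) Wn phi n (updn tau io t) io =
  if (k < n)%N then phiE phi io (Hs tau io k.+1) else 1.
Proof.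
elim: k => [|k IH] hk.
  rewrite big_ord1 Wn_updn /=.
  by case: n hk => [|n'] _ /=; rewrite subr0.
rewrite big_ord_recr IH ?(ltnW hk) // ifT // Wn_updn /=.
case: ifP => h; first by rewrite addrC subrK.
have e : n = k.+1 by apply/eqP; rewrite eqn_leq hk andbT leqNgt h.
by rewrite e addrC subrK.
Qed.

Lemma abel (w h : nat -> R) m :
  (forall k, (k <= m)%N -> 0 <= \sum_(t < k) w t) ->
  (forall k, (k.+1 < m)%N -> h k <= h k.+1) ->
  \sum_(t < m) w t * h t <= (\sum_(t < m) w t) * h m.-1.
Proof.
elim: m => [|m IH] hD hh; first by rewrite !big_ord0 mul0r.
rewrite !big_ord_recr /= mulrDl lerD2r.
apply: le_trans (IH _ _) _.
- by move=> k hk; apply: hD; apply: leqW.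
- by move=> k hk; apply: hh; apply: leqW.
case: m {IH hD hh} (hD m (leqnSn m)) (hh m.-1) => [|m] hDm hhm.
  by rewrite big_ord0 !mul0r.
by apply: ler_wpM2l => //; apply: hhm.
Qed.

Lemma sum_cmp (w1 w2 h : nat -> R) m :
  (forall k, (k <= m)%N -> \sum_(t < k) w2 t <= \sum_(t < k) w1 t) ->
  \sum_(t < m) w1 t = \sum_(t < m) w2 t ->
  (forall k, (k.+1 < m)%N -> h k <= h k.+1) ->
  \sum_(t < m) w1 t * h t <= \sum_(t < m) w2 t * h t.
Proof.
move=> hD htot hh.
have := @abel (fun t => w1 t - w2 t) h m.
rewrite sumrB htot subrr mul0r.
under eq_bigr do rewrite mulrBl.
rewrite sumrB subr_le0; apply => // k hk.
by rewrite sumrB subr_ge0; apply: hD.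
Qed.

Lemma all2_map_same (T : Type) (f g : T -> {set 'I_d}) (s : seq T) :
  (forall x, f x \subset g x) -> all2 (fun a b : {set 'I_d} => a \subset b) (map f s) (map g s).
Proof. by move=> h; elim: s => //= x s ->; rewrite h. Qed.

Lemma phiE_cmp (phiA phiB : 'I_d -> seq {set 'I_d} -> R) tau tau' io m :
  config_vals phiA -> pos_correlated phiB -> dominates phiA phiB ->
  (forall j, tau j <= tau' j)%N ->
  phiE phiB io (Hs tau' io m) <= phiE phiA io (Hs tau io m).
Proof.
move=> _ hpc hdom hle.
have hsz : size (Hs tau' io m) = size (Hs tau io m) by rewrite !size_map.
rewrite /phiE.
case E: (Hs tau io m) => [|x s].
  by move: hsz; rewrite E; case: (Hs tau' io m).
case E': (Hs tau' io m) => [|y t].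
  by move: hsz; rewrite E E'.
rewrite -E -E'; apply: (@le_trans _ _ (phiB io (Hs tau io m))).
  apply: hpc; [exact: Hs_valid | exact: Hs_valid | by rewrite E' | by [] |].
  rewrite /Hs; apply: all2_map_same => j.
  apply: setSI; apply/subsetP => k; rewrite !inE => hk.
  exact: leq_ltn_trans (hle k) hk.
by apply: hdom; rewrite ?Hs_valid ?E.
Qed.

Section Fin.
Variable n : nat.
Local Notation FF := {ffun 'I_d -> 'I_n.+1}.

Definition tauf (x : FF) : 'I_d -> nat := fun j => nat_of_ord (x j).

Lemma size_rtraj tau : size (rev (traj n tau)) == n.+1.
Proof. by rewrite size_rev size_traj. Qed.

Definition rtup (x : FF) : (n.+1).-tuple {set 'I_d} := Tuple (size_rtraj (tauf x)).

Definition Evt (x : FF) : R := ([exists j, n <= x j]%N)%:R.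

Lemma rtup_inj : injective rtup.
Proof.
move=> x y /(congr1 val) /= /(congr1 rev); rewrite !revK => e.
apply/ffunP => j; apply/val_inj => /=.
by apply: (traj_inj _ _ e) => k; rewrite /tauf -ltnS.
Qed.

Lemma Pnd_eq phi : valid phi ->
  P_notdone phi pi n = \sum_(x : FF) Evt x * \prod_j Wn phi n (tauf x) j.
Proof.
move=> hv; rewrite /P_notdone.
rewrite (bigID (fun r => r \in [set rtup x | x in FF])) /=.
rewrite [X in _ + X]big1 ?addr0; last first.
  move=> r hr; apply/eqP; rewrite mulf_eq0; apply/orP; right.
  apply: contraNT hr => h.
  have [tau [hb er]] := rprob_img h (size_tuple r).
  apply/imsetP; exists [ffun j => inord (tau j)] => //.
  apply/val_inj => /=; rewrite er; congr rev; apply: traj_ext => j.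
  by rewrite /tauf ffunE inordK // ltnS.
rewrite big_imset /=; last by move=> x y _ _; apply: rtup_inj.
apply: eq_bigr => x _; rewrite rprob_traj // head_rev last_traj /Evt.
have -> : ([set k | (tauf x k < n)%N] != [set: 'I_d]) = [exists j, n <= x j]%N.
  apply/idP/idP => [h | /existsP [j hj]].
    apply: (contraNT _ h) => /existsPn hn; apply/eqP/setP => k.
    by rewrite !inE ltnNge /tauf hn.
  by apply/eqP => e; have := in_setT j; rewrite -e inE ltnNge /tauf hj.
by [].
Qed.

Definition agree (i : nat) (y x : FF) := [forall j : 'I_d, (j < i)%N ==> (x j == y j)].

Definition G phi (i : nat) (y : FF) : R :=
  \sum_(x : FF) (agree i y x)%:R * ((\prod_(j : 'I_d | (i <= j)%N) Wn phi n (tauf x) j) * Evt x).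

Definition upd (y : FF) (io : 'I_d) (t : 'I_n.+1) : FF :=
  [ffun j => if j == io then t else y j].

Lemma G0 phi y : G phi 0 y = \sum_(x : FF) Evt x * \prod_j Wn phi n (tauf x) j.
Proof.
apply: eq_bigr => x _.
have -> : agree 0 y x by apply/forallP => j.
by rewrite mul1r mulrC.
Qed.

Lemma Gd phi y : G phi d y = Evt y.
Proof.
have hp : forall x : FF, \prod_(j : 'I_d | (d <= j)%N) Wn phi n (tauf x) j = 1.
  by move=> x; apply: big_pred0 => j; rewrite leqNgt ltn_ord.
rewrite /G; under eq_bigr do rewrite hp mul1r.
rewrite (bigD1 y) //= big1 ?addr0.
  have -> : agree d y y by apply/forallP => j; rewrite eqxx implybT.
  by rewrite mul1r.
move=> x hx.
have -> : agree d y x = false.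
  apply/negbTE; apply: contra hx => /forallP h; apply/eqP/ffunP => j.
  by apply/eqP; have := h j; rewrite ltn_ord.
by rewrite mul0r.
Qed.

Lemma sum_ind (T : finType) (x : T) (c : R) : \sum_(t : T) (x == t)%:R * c = c.
Proof.
rewrite (bigD1 x) //= eqxx mul1r big1 ?addr0 // => t ht.
by rewrite eq_sym (negbTE ht) mul0r.
Qed.

Lemma agreeS (i : nat) (hi : (i < d)%N) y x t :
  agree i.+1 (upd y (Ordinal hi) t) x = (x (Ordinal hi) == t) && agree i y x.
Proof.
apply/forallP/andP => [h | [h1 /forallP h2] j].
  split.
    by have := h (Ordinal hi); rewrite /= ltnSn ffunE eqxx.
  apply/forallP => j; apply/implyP => hj.
  have := h j; rewrite ltnS (ltnW hj) ffunE /=.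
  have -> : (j == Ordinal hi) = false by apply/negbTE; rewrite -val_eqE /= neq_ltn hj.
  by [].
apply/implyP => hj; rewrite ffunE.
case: (eqVneq j (Ordinal hi)) => [-> //|hne].
have hj' : (j < i)%N.
  by rewrite ltn_neqAle -ltnS hj andbT; move: hne; rewrite -val_eqE.
by have := h2 j; rewrite hj'.
Qed.

Lemma Gsplit phi (i : nat) (hi : (i < d)%N) y :
  G phi i y = \sum_(t : 'I_n.+1)
    Wn phi n (tauf (upd y (Ordinal hi) t)) (Ordinal hi) * G phi i.+1 (upd y (Ordinal hi) t).
Proof.
set io := Ordinal hi.
rewrite /G.
rewrite (eq_bigr (fun x : FF => \sum_(t : 'I_n.+1) (x io == t)%:R *
   ((agree i y x)%:R * ((\prod_(j : 'I_d | (i <= j)%N) Wn phi n (tauf x) j) * Evt x))));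
  last by move=> x _; rewrite sum_ind.
rewrite exchange_big /=; apply: eq_bigr => t _.
rewrite mulr_sumr; apply: eq_bigr => x _.
rewrite agreeS mulrA -natrM mulnb.
case: (boolP ((x io == t) && agree i y x)) => h; last by rewrite !mul0r mulr0.
rewrite !mul1r (bigD1 io) //= -mulrA; congr (_ * _).
  apply: Wn_loc => k hk.
  case/andP: h => /eqP h1 /forallP h2.
  rewrite /tauf ffunE; case: (eqVneq k io) => [->|hne]; first by rewrite h1.
  have hk' : (k < i)%N by rewrite ltn_neqAle hk andbT; move: hne; rewrite -val_eqE.
  by have := h2 k; rewrite hk' => /eqP ->.
congr (_ * _); apply: eq_bigl => j; rewrite -val_eqE /=.
by rewrite ltn_neqAle andbC eq_sym.
Qed.

Lemma Evt_mono (y y' : FF) : (forall j, y j <= y' j)%N -> Evt y <= Evt y'.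
Proof.
move=> h; rewrite /Evt.
case: (boolP [exists j, n <= y j]%N) => h1; last by rewrite ler0n.
have -> : [exists j, n <= y' j]%N.
  by case/existsP: h1 => j hj; apply/existsP; exists j; exact: leq_trans hj (h j).
by [].
Qed.

Lemma tauf_upd (y : FF) io t j : tauf (upd y io t) j = updn (tauf y) io t j.
Proof. by rewrite /tauf /updn ffunE; case: (j == io). Qed.

Lemma G_mono k : forall (A B : 'I_d -> seq {set 'I_d} -> R),
  valid A -> valid B -> pos_correlated B -> dominates A B ->
  forall i : nat, (i + k = d)%N -> forall y y' : FF, (forall j, y j <= y' j)%N ->
  G A i y <= G B i y'.
Proof.
elim: k => [|k IH] A B hA hB hpB hAB i hik y y' hle.
  by move: hik; rewrite addn0 => ->; rewrite !Gd; apply: Evt_mono.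
have hi : (i < d)%N by rewrite -hik addnS ltnS leq_addr.
have hik' : (i.+1 + k = d)%N by rewrite addSn -addnS.
rewrite !(Gsplit _ hi); set io := Ordinal hi.
have conv : forall F : 'I_n.+1 -> R, \sum_(t : 'I_n.+1) F t = \sum_(t < n.+1) F (inord t).
  by move=> F; apply: eq_bigr => t _; rewrite inord_val.
rewrite [X in X <= _]conv [X in _ <= X]conv.
have Wc : forall phi (z : FF) (t : 'I_n.+1),
    Wn phi n (tauf (upd z io (inord t))) io = Wn phi n (updn (tauf z) io t) io.
  move=> phi z t; apply: Wn_loc => j _; rewrite tauf_upd /updn.
  by case: (j == io); rewrite // inordK.
have hBB : dominates B B by move=> *; exact: lexx.
have hBm : forall t, (t.+1 < n.+1)%N ->
    G B i.+1 (upd y' io (inord t)) <= G B i.+1 (upd y' io (inord t.+1)).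
  move=> t ht; apply: (IH B B hB hB hpB hBB (i.+1) hik') => j; rewrite !ffunE.
  case: (j == io) => //; rewrite !inordK //; exact: ltnW.
apply: (@le_trans _ _ (\sum_(t < n.+1)
   Wn A n (updn (tauf y) io t) io * G B i.+1 (upd y' io (inord t)))).
  apply: ler_sum => t _; rewrite Wc; apply: ler_wpM2l; first exact: Wn_ge0.
  apply: (IH A B hA hB hpB hAB (i.+1) hik') => j; rewrite !ffunE.
  by case: (j == io).
under [X in _ <= X]eq_bigr do rewrite Wc.
apply: (@sum_cmp (fun t => Wn A n (updn (tauf y) io t) io)
                 (fun t => Wn B n (updn (tauf y') io t) io)
                 (fun t => G B i.+1 (upd y' io (inord t)))).
- move=> k' hk'; case: k' hk' => [|k'] hk'; first by rewrite !big_ord0.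
  rewrite !cdf //; case: ifP => _ //.
  by apply: phiE_cmp => //; case: hA.
- by rewrite !cdf // ltnn.
- exact: hBm.
Qed.

End Fin.

End Doors.


Theorem mainTheorem9 (R : realType) (d : nat) (hd : (2 <= d)%N)
  (phiA phiB : 'I_d -> seq {set 'I_d} -> R) :
  config_vals phiA -> monotone_config phiA -> pos_correlated phiA ->
  config_vals phiB -> monotone_config phiB -> pos_correlated phiB ->
  dominates phiA phiB ->
  forall pi : nat -> 'I_d, (ET phiA pi <= ET phiB pi)%E.
Proof.
move=> hcA hmA hpA hcB hmB hpB hdom pi.
have vA : valid phiA by split.
have vB : valid phiB by split.
rewrite /ET; apply: lee_nneseries => [m _ _ | m _]; rewrite lee_fin.
  rewrite (Pnd_eq pi m vA); apply: sumr_ge0 => x _.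
  apply: mulr_ge0; first by rewrite /Evt ler0n.
  by apply: prodr_ge0 => j _; apply: Wn_ge0.
rewrite (Pnd_eq pi m vA) (Pnd_eq pi m vB).
rewrite -(G0 pi (n:=m) phiA [ffun => ord0]) -(G0 pi (n:=m) phiB [ffun => ord0]).
by apply: (G_mono (k:=d) (i:=0) pi vA vB hpB hdom) => // j.
Qed.
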